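(* Let $\alpha\in\mathbb{N}_0$ and let $L_{2\alpha+4,x}^{\alpha}y(x)=(-1)^{\alpha+1}e^x x\,D_x^{\alpha+2}\{e^{-x}D_x^{\alpha+2}[x^{\alpha+1}y(x)]\}$. Then for all $n\in\mathbb{N}$, $$\big[L_{2\alpha+4,x}^{\alpha}+(n)_{\alpha+2}\big]T_n^{\alpha}(x)=0,\qquad 0\le x<\infty.$$
   Context: $D_x^i$ is the $i$-fold derivative; $(a)_k$ is the Pochhammer symbol. $L_n^{\gamma}(x)=\frac{(\gamma+1)_n}{n!}{}_1F_1(-n;\gamma+1;x)$ are the Laguerre polynomials, and for $n\ge1$, $T_n^{\alpha}(x)=-t_n^{\alpha}\,x\,L_{n-1}^{\alpha+2}(x)$ with $t_n^{\alpha}=(\alpha+2)_{n-1}/n!$. *)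

(* Defs.v *)
From Stdlib Require Import Arith Factorial Reals ClassicalEpsilon.
Open Scope R_scope.

Fixpoint poch (a : R) (k : nat) : R :=
  match k with
  | O => 1
  | S k' => poch a k' * (a + INR k')
  end.

(* Terminating confluent hypergeometric series 1F1(-n; b; x).
   Since (-n)_k = 0 for k > n, the series is the finite sum over k = 0..n. *)
Definition hyp1F1_neg (n : nat) (b x : R) : R :=
  sum_f_R0 (fun k => poch (- INR n) k / poch b k * x ^ k / INR (fact k)) n.

Definition Laguerre (n : nat) (gamma x : R) : R :=
  poch (gamma + 1) n / INR (fact n) * hyp1F1_neg n (gamma + 1) x.

Definition tcoef (n alpha : nat) : R :=
  poch (INR alpha + 2) (n - 1) / INR (fact n).

Definition Tpoly (n alpha : nat) (x : R) : R :=
  - tcoef n alpha * x * Laguerre (n - 1) (INR alpha + 2) x.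

(* Derivative of f at x (the unique l with derivable_pt_lim f x l when
   f is differentiable at x; an unspecified value otherwise). *)
Definition deriv (f : R -> R) : R -> R :=
  fun x => epsilon (inhabits 0) (fun l => derivable_pt_lim f x l).

Fixpoint Dn (i : nat) (f : R -> R) : R -> R :=
  match i with
  | O => f
  | S i' => deriv (Dn i' f)
  end.

Definition Lop (alpha : nat) (y : R -> R) (x : R) : R :=
  (-1) ^ (alpha + 1) * exp x * x *
  Dn (alpha + 2) (fun t => exp (- t) * Dn (alpha + 2) (fun s => s ^ (alpha + 1) * y s) t) x.

(* Main.v *)
Require Import Defs.
From Stdlib Require Import Factorial Reals Binomial Lra Lia ClassicalEpsilon FunctionalExtensionality.
Open Scope R_scope.

Definition P (c : nat -> R) (N : nat) (x : R) : R :=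
  sum_f_R0 (fun k => c k * x ^ k) N.

Lemma deriv_eq f x l : derivable_pt_lim f x l -> deriv f x = l.
Proof.
  intro H. unfold deriv.
  apply (uniqueness_limite f x).
  - apply (epsilon_spec (inhabits 0) (fun l => derivable_pt_lim f x l)). exists l; exact H.
  - exact H.
Qed.

Definition dco (c : nat -> R) : nat -> R := fun k => INR (S k) * c (S k).

Lemma P_derive_gen c N x :
  derivable_pt_lim (P c N) x (P (dco c) N x - INR (S N) * c (S N) * x ^ N).
Proof.
  induction N.
  - change (P c 0) with (fct_cte (c 0%nat * 1)).
    replace (P (dco c) 0 x - INR 1 * c 1%nat * x ^ 0) with 0
      by (unfold P, dco; simpl; ring).
    apply derivable_pt_lim_const.
  - change (P c (S N)) with (plus_fct (P c N) (mult_real_fct (c (S N)) (fun y => y ^ (S N)))).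
    replace (P (dco c) (S N) x - INR (S (S N)) * c (S (S N)) * x ^ S N) with
      ((P (dco c) N x - INR (S N) * c (S N) * x ^ N) + c (S N) * (INR (S N) * x ^ Init.Nat.pred (S N)))
      by (unfold P, dco; cbn [sum_f_R0 Init.Nat.pred pow]; ring).
    apply derivable_pt_lim_plus; [exact IHN|].
    apply derivable_pt_lim_scal, derivable_pt_lim_pow.
Qed.

Lemma P_derive c N x : c (S N) = 0 -> derivable_pt_lim (P c N) x (P (dco c) N x).
Proof.
  intro H. pose proof (P_derive_gen c N x) as D. rewrite H in D.
  replace (P (dco c) N x) with (P (dco c) N x - INR (S N) * 0 * x ^ N) by ring. exact D.
Qed.

Definition eco (c : nat -> R) : nat -> R := fun k => dco c k - c k.

Lemma P_minus c d N x : P (fun k => c k - d k) N x = P c N x - P d N x.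
Proof.
  unfold P. rewrite <- minus_sum. apply sum_eq. intros. ring.
Qed.

Lemma P_scal (K : R) c N x : P (fun k => K * c k) N x = K * P c N x.
Proof.
  unfold P. rewrite scal_sum. apply sum_eq. intros. ring.
Qed.

Lemma expP_derive c N x : c (S N) = 0 ->
  derivable_pt_lim (fun s => exp (- s) * P c N s) x (exp (- x) * P (eco c) N x).
Proof.
  intro H.
  change (fun s => exp (- s) * P c N s) with (mult_fct (comp exp (opp_fct id)) (P c N)).
  replace (exp (- x) * P (eco c) N x) with
    ((exp (- x) * (- 1)) * P c N x + exp (- x) * P (dco c) N x)
    by (unfold eco; rewrite P_minus; ring).
  assert (H1 : derivable_pt_lim (comp exp (opp_fct id)) x (exp (- x) * (- 1))).
  { apply derivable_pt_lim_comp.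
    + apply derivable_pt_lim_opp, derivable_pt_lim_id.
    + exact (derivable_pt_lim_exp (- x)). }
  exact (derivable_pt_lim_mult _ _ x _ _ H1 (P_derive c N x H)).
Qed.

Definition vanish (c : nat -> R) (N : nat) := forall k, (N < k)%nat -> c k = 0.

Lemma vanish_dco c N : vanish c N -> vanish (dco c) N.
Proof. intros H k Hk. unfold dco. rewrite H by lia. ring. Qed.

Lemma vanish_eco c N : vanish c N -> vanish (eco c) N.
Proof. intros H k Hk. unfold eco. rewrite (vanish_dco c N H k Hk), H by lia. ring. Qed.

Lemma Dn_P i : forall c N, vanish c N -> Dn i (P c N) = P (Nat.iter i dco c) N.
Proof.
  induction i; intros c N H; [reflexivity|].
  simpl Dn. rewrite IHi by exact H.
  assert (V : vanish (Nat.iter i dco c) N).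
  { clear IHi. induction i; [exact H|]. simpl. apply vanish_dco, IHi. }
  apply functional_extensionality; intro x.
  apply deriv_eq. simpl Nat.iter. apply P_derive. apply V. lia.
Qed.

Lemma Dn_expP i : forall c N, vanish c N ->
  Dn i (fun s => exp (- s) * P c N s) = (fun s => exp (- s) * P (Nat.iter i eco c) N s).
Proof.
  induction i; intros c N H; [reflexivity|].
  simpl Dn. rewrite IHi by exact H.
  assert (V : vanish (Nat.iter i eco c) N).
  { clear IHi. induction i; [exact H|]. simpl. apply vanish_eco, IHi. }
  apply functional_extensionality; intro x.
  apply deriv_eq. simpl Nat.iter. apply expP_derive. apply V. lia.
Qed.

Lemma poch_nat j k : poch (INR j + 1) k = INR (fact (j + k)) / INR (fact j).
Proof.
  induction k.
  - simpl. rewrite Nat.add_0_r. field. apply INR_fact_neq_0.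
  - simpl poch. rewrite IHk. rewrite Nat.add_succ_r.
    change (fact (S (j + k))) with (S (j + k) * fact (j + k))%nat.
    rewrite mult_INR, S_INR, plus_INR. field. apply INR_fact_neq_0.
Qed.

Lemma poch_neg m k : (k <= m)%nat ->
  poch (- INR m) k = (-1) ^ k * INR (fact m) / INR (fact (m - k)).
Proof.
  induction k; intro Hk.
  - simpl. rewrite Nat.sub_0_r. field. apply INR_fact_neq_0.
  - simpl poch. rewrite IHk by lia.
    assert (E : (m - k = S (m - S k))%nat) by lia.
    assert (E2 : INR (S (m - S k)) = INR m - INR k) by (rewrite <- E; apply minus_INR; lia).
    rewrite E. change (fact (S (m - S k))) with (S (m - S k) * fact (m - S k))%nat.
    rewrite mult_INR, E2. simpl pow.
    assert (INR m - INR k <> 0) by (rewrite <- E2; apply not_0_INR; lia).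
    field. split; [apply INR_fact_neq_0 | assumption].
Qed.

Definition Lc (m g k : nat) : R :=
  if Nat.leb k m then (-1) ^ k * C (m + g) (m - k) / INR (fact k) else 0.

Lemma vanish_Lc m g : vanish (Lc m g) m.
Proof.
  intros k Hk. unfold Lc. destruct (Nat.leb k m) eqn:E; [|reflexivity].
  apply Nat.leb_le in E. lia.
Qed.

Lemma Laguerre_P m b x : Laguerre m (INR b) x = P (Lc m b) m x.
Proof.
  unfold Laguerre, hyp1F1_neg, P. rewrite scal_sum. apply sum_eq. intros k Hk.
  unfold Lc. replace (Nat.leb k m) with true by (symmetry; apply Nat.leb_le; lia).
  rewrite !poch_nat, poch_neg by lia. unfold C.
  replace (m + b - (m - k))%nat with (b + k)%nat by lia.
  rewrite (Nat.add_comm m b).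
  field. repeat split; apply INR_fact_neq_0.
Qed.

Lemma iter_dco i : forall c k,
  Nat.iter i dco c k = INR (fact (k + i)) / INR (fact k) * c (k + i)%nat.
Proof.
  induction i; intros c k.
  - simpl. rewrite Nat.add_0_r. field. apply INR_fact_neq_0.
  - simpl Nat.iter. unfold dco at 1. rewrite IHi.
    replace (S k + i)%nat with (k + S i)%nat by lia.
    change (fact (S k)) with (S k * fact k)%nat. rewrite mult_INR.
    field. split; [apply INR_fact_neq_0 | apply not_0_INR; lia].
Qed.

Lemma C_n0 n : C n 0 = 1.
Proof. unfold C. rewrite Nat.sub_0_r. change (fact 0) with 1%nat. simpl INR. field. apply INR_fact_neq_0. Qed.

Lemma eco_Lc m g k : eco (Lc m g) k = - Lc m (S g) k.
Proof.
  unfold eco, dco, Lc.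
  destruct (Nat.lt_total k m) as [Hlt | [Heq | Hgt]].
  - replace (Nat.leb (S k) m) with true by (symmetry; apply Nat.leb_le; lia).
    replace (Nat.leb k m) with true by (symmetry; apply Nat.leb_le; lia).
    pose proof (pascal (m + g) (m - S k)) as Hp.
    replace (S (m - S k)) with (m - k)%nat in Hp by lia.
    replace (S (m + g)) with (m + S g)%nat in Hp by lia.
    rewrite <- Hp by lia.
    change (fact (S k)) with (S k * fact k)%nat. rewrite mult_INR. simpl pow.
    field. split; [apply INR_fact_neq_0 | apply not_0_INR; lia].
  - subst k. replace (Nat.leb (S m) m) with false by (symmetry; apply Nat.leb_gt; lia).
    rewrite Nat.leb_refl, Nat.sub_diag, !C_n0. ring.
  - replace (Nat.leb (S k) m) with false by (symmetry; apply Nat.leb_gt; lia).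
    replace (Nat.leb k m) with false by (symmetry; apply Nat.leb_gt; lia). ring.
Qed.

Lemma iter_eco m K i : forall k,
  Nat.iter i eco (fun k => K * Lc m 0 k) k = K * (-1) ^ i * Lc m i k.
Proof.
  induction i; intro k.
  - simpl. ring.
  - simpl Nat.iter. unfold eco at 1, dco. rewrite !IHi.
    pose proof (eco_Lc m i k) as H. unfold eco, dco in H.
    replace (INR (S k) * (K * (-1) ^ i * Lc m i (S k)) - K * (-1) ^ i * Lc m i k)
      with (K * (-1) ^ i * (INR (S k) * Lc m i (S k) - Lc m i k)) by ring.
    rewrite H. simpl pow. ring.
Qed.

Lemma shift_sum b : forall m h,
  sum_f_R0 (fun k => if Nat.leb b k then h (k - b)%nat else 0) (m + b) = sum_f_R0 h m.
Proof.
  induction b; intros m h.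
  - rewrite Nat.add_0_r. apply sum_eq. intros i _. simpl. rewrite Nat.sub_0_r. reflexivity.
  - rewrite Nat.add_succ_r, decomp_sum by lia. simpl Nat.leb at 1.
    rewrite Rplus_0_l. simpl Init.Nat.pred. apply IHb.
Qed.

Lemma P_tail c m d x : vanish c m -> P c (m + d) x = P c m x.
Proof.
  intro H. induction d.
  - rewrite Nat.add_0_r. reflexivity.
  - rewrite Nat.add_succ_r. unfold P in *. simpl sum_f_R0. rewrite IHd, H by lia. ring.
Qed.

Lemma D1coef m b k :
  INR (fact (k + b)) / INR (fact k) * Lc m b k = INR (fact (m + b)) / INR (fact m) * Lc m 0 k.
Proof.
  unfold Lc. destruct (Nat.leb k m) eqn:E; [|ring].
  apply Nat.leb_le in E. unfold C.
  replace (m + b - (m - k))%nat with (k + b)%nat by lia.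
  replace (m + 0 - (m - k))%nat with k by lia. rewrite Nat.add_0_r.
  field. repeat split; apply INR_fact_neq_0.
Qed.

Theorem corollary2p2 (alpha n : nat) (hn : (1 <= n)%nat) (x : R) (hx : 0 <= x) :
  Lop alpha (Tpoly n alpha) x + poch (INR n) (alpha + 2) * Tpoly n alpha x = 0.
Proof.
  destruct n as [|m]; [lia|]. clear hn.
  set (t := tcoef (S m) alpha).
  assert (Ea : INR alpha + 2 = INR (alpha + 2)) by (rewrite plus_INR; simpl; ring).
  assert (ET : forall s, Tpoly (S m) alpha s = - t * s * P (Lc m (alpha + 2)) m s).
  { intro s. unfold Tpoly. fold t. rewrite Ea. simpl (S m - 1)%nat. rewrite Nat.sub_0_r.
    rewrite Laguerre_P. reflexivity. }
  set (a := fun k => if Nat.leb (alpha + 2) k then - t * Lc m (alpha + 2) (k - (alpha + 2)) else 0).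
  assert (H1 : (fun s => s ^ (alpha + 1) * Tpoly (S m) alpha s) = P a (m + (alpha + 2))).
  { apply functional_extensionality; intro s. rewrite ET. unfold P, a.
    transitivity (sum_f_R0 (fun k => if Nat.leb (alpha + 2) k then
          (fun j => - t * Lc m (alpha + 2) j * s ^ (j + (alpha + 2))) (k - (alpha + 2))%nat else 0)
          (m + (alpha + 2))).
    - rewrite (shift_sum (alpha + 2) m (fun j => - t * Lc m (alpha + 2) j * s ^ (j + (alpha + 2)))). rewrite <- (Rmult_assoc (s ^ (alpha + 1))), scal_sum. apply sum_eq. intros j _.
      rewrite !pow_add. ring.
    - apply sum_eq. intros k _. destruct (Nat.leb (alpha + 2) k) eqn:E.
      + apply Nat.leb_le in E. replace (k - (alpha + 2) + (alpha + 2))%nat with k by lia. reflexivity.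
      + ring. }
  assert (Va : vanish a (m + (alpha + 2))).
  { intros k Hk. unfold a. destruct (Nat.leb (alpha + 2) k); [|reflexivity].
    rewrite vanish_Lc by lia. ring. }
  set (A := - t * (INR (fact (m + (alpha + 2))) / INR (fact m))).
  assert (H2 : Nat.iter (alpha + 2) dco a = fun k => A * Lc m 0 k).
  { apply functional_extensionality; intro k. rewrite iter_dco. unfold a.
    replace (Nat.leb (alpha + 2) (k + (alpha + 2))) with true by (symmetry; apply Nat.leb_le; lia).
    replace (k + (alpha + 2) - (alpha + 2))%nat with k by lia.
    unfold A. transitivity (- t * (INR (fact (k + (alpha + 2))) / INR (fact k) * Lc m (alpha + 2) k)); [ring | rewrite D1coef; ring]. }
  assert (V2 : vanish (fun k => A * Lc m 0 k) (m + (alpha + 2))).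
  { intros k Hk. rewrite vanish_Lc by lia. ring. }
  assert (H3 : Nat.iter (alpha + 2) eco (fun k => A * Lc m 0 k)
               = fun k => A * (-1) ^ (alpha + 2) * Lc m (alpha + 2) k).
  { apply functional_extensionality; intro k. apply iter_eco. }
  unfold Lop. rewrite H1, (Dn_P _ _ _ Va), H2, (Dn_expP _ _ _ V2), H3.
  rewrite P_scal, P_tail by apply vanish_Lc.
  rewrite ET. rewrite S_INR, poch_nat.
  set (u := (-1) ^ (alpha + 1)).
  assert (Hu2 : (-1) ^ (alpha + 2) = - u).
  { unfold u. replace (alpha + 2)%nat with (S (alpha + 1)) by lia. simpl. ring. }
  assert (Hu : u * u = 1).
  { unfold u. rewrite <- Rpow_mult_distr. replace (-1 * -1) with 1 by ring. apply pow1. }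
  rewrite Hu2, exp_Ropp. unfold A.
  set (F := INR (fact (m + (alpha + 2))) / INR (fact m)).
  set (Q := P (Lc m (alpha + 2)) m x).
  transitivity ((u * u - 1) * (t * F * x * Q)).
  - field. apply Rgt_not_eq, exp_pos.
  - rewrite Hu. ring.
Qed.
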